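(* Let $r\ge3$, $n\ge r+1$. For every $e\in V_\omega$ we have $R.e=(F_1F_2\cdots F_r).e$ and $R^{-1}.e=(E_{r-1}E_{r-2}\cdots E_1)E_n.e$.
   Context: $V$ is the $\mathbb{Q}(v)$-space with basis $e_t$ ($t\in\mathbb{Z}$); $E_i,F_i,K_i$ ($1\le i\le n$) act by $E_ie_{t+1}=e_t$ if $i\equiv t\pmod n$ and $0$ otherwise, $F_ie_t=e_{t+1}$ if $i\equiv t\pmod n$ and $0$ otherwise, $K_ie_t=ve_t$ if $i\equiv t\pmod n$ and $e_t$ otherwise; $R^{\pm1}e_t=e_{t\pm1}$. On $V^{\otimes r}$ these act via iterated comultiplication $\Delta(E_i)=E_i\otimes K_iK_{i+1}^{-1}+1\otimes E_i$, $\Delta(F_i)=K_i^{-1}K_{i+1}\otimes F_i+F_i\otimes1$, $\Delta(X)=X\otimes X$ for $X\in\{K_i^{\pm1},R^{\pm1}\}$ (indices mod $n$). The weight of a basis tensor $e_{t_1}\otimes\cdots\otimes e_{t_r}$ is $\lambda\in\mathbb{Z}_{\ge0}^n$ with $\lambda_i=|\{j:t_j\equiv i\pmod n\}|$; $V_\lambda$ is the span of basis tensors of weight $\lambda$. $\omega=(1,\dots,1,0,\dots,0)$ with $r$ ones and $n-r$ zeros. *)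

(* Defs.v *)
From mathcomp Require Import all_boot all_order all_algebra fraction.
Set Implicit Arguments. Unset Strict Implicit. Unset Printing Implicit Defensive.
Import Order.TTheory GRing.Theory Num.Theory.
Local Open Scope ring_scope.

Definition Qv : fieldType := {fraction {poly rat}}.
Definition v : Qv := tofrac ('X : {poly rat}).

(* A basis tensor e_{t_1} (x) ... (x) e_{t_k} is the sequence [:: t_1; ..; t_k].
   A vector of the tensor power is a finite formal linear combination
   seq (Qv * seq int); its coefficient function is [coef]. *)
Definition vec := seq (Qv * seq int).
Definition coef (l : vec) (s : seq int) : Qv :=
  \sum_(p <- l) p.1 * (p.2 == s)%:R.

(* an operator, given by its values on basis tensors *)
Definition op := seq int -> vec.
Definition act (X : op) (l : vec) : vec :=
  flatten [seq [seq (p.1 * q.1, q.2) | q <- X p.2] | p <- l].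
(* action of the product X_1 X_2 ... X_m (X_m acts first) *)
Definition actw (w : seq op) (l : vec) : vec := foldr act l w.

Definition congr (n : nat) (i : nat) (t : int) : bool := (t == i%:Z %[mod n%:Z])%Z.

(* eigenvalue of K_i on e_t *)
Definition kval (n i : nat) (t : int) : Qv := if congr n i t then v else 1.

(* Delta^{(k)}(E_i) = sum_j 1 (x)..(x) 1 (x) E_i (x) K_iK_{i+1}^{-1} (x)..(x) K_iK_{i+1}^{-1}
   with E_i e_{s} = e_{s-1} if i == s-1 (mod n), else 0. *)
Definition Eop (n i : nat) : op := fun t =>
  [seq (\prod_(x <- drop j.+1 t) (kval n i x / kval n i.+1 x),
        set_nth 0 t j (nth 0 t j - 1))
  | j <- iota 0 (size t) & congr n i (nth 0 t j - 1)].

(* Delta^{(k)}(F_i) = sum_j K_i^{-1}K_{i+1} (x)..(x) K_i^{-1}K_{i+1} (x) F_i (x) 1 (x)..(x) 1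
   with F_i e_s = e_{s+1} if i == s (mod n), else 0. *)
Definition Fop (n i : nat) : op := fun t =>
  [seq (\prod_(x <- take j t) (kval n i.+1 x / kval n i x),
        set_nth 0 t j (nth 0 t j + 1))
  | j <- iota 0 (size t) & congr n i (nth 0 t j)].

Definition Rop : op := fun t => [:: (1, [seq x + 1 | x <- t])].
Definition Rinvop : op := fun t => [:: (1, [seq x - 1 | x <- t])].

(* weight of a basis tensor: lambda_i = #{j : t_j == i mod n}, i = 1..n,
   index i : 'I_n standing for i.+1 *)
Definition weight (n : nat) (t : seq int) : {ffun 'I_n -> nat} :=
  [ffun i : 'I_n => count (congr n i.+1) t].
Definition omega (n r : nat) : {ffun 'I_n -> nat} :=
  [ffun i : 'I_n => nat_of_bool (i < r)%N].

(* Main.v *)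
Set Warnings "-notation-overridden,-ambiguous-paths".
Require Import Defs.
From mathcomp Require Import all_boot all_order all_algebra.
From mathcomp Require Import zify.
Import GRing.Theory Num.Theory.
Local Open Scope ring_scope.

Definition rho (n : nat) (y : int) : nat := `|(y %% n%:Z)%Z|%N.

Lemma rhoE n y : (0 < n)%N -> (y %% n%:Z)%Z = (rho n y)%:Z.
Proof.
move=> n0; rewrite /rho gez0_abs // modz_ge0 //.
by rewrite eqz_nat -lt0n.
Qed.

Lemma rho_lt n y : (0 < n)%N -> (rho n y < n)%N.
Proof.
move=> n0; have := ltz_pmod y (_ : 0 < n%:Z); rewrite rhoE // ltz_nat; apply.
by rewrite ltz_nat.
Qed.

Lemma congrE n i y : (0 < n)%N -> congr n i y = (rho n y == i %% n)%N.
Proof.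
move=> n0; rewrite /congr rhoE // modz_nat.
by rewrite eqz_nat.
Qed.

Lemma rho_add1 n y : (0 < n)%N -> rho n (y + 1) = ((rho n y).+1 %% n)%N.
Proof.
move=> n0; have h := rhoE n (y + 1) n0.
rewrite -(modzDml y 1) (rhoE n y n0) in h.
have e1 : (Posz (rho n y) + 1)%R = Posz (rho n y).+1 by rewrite -addn1 PoszD.
by rewrite e1 modz_nat in h; case: h.
Qed.

Lemma congr_sub1 n i y : congr n i.+1 y = congr n i (y - 1).
Proof.
rewrite /congr -[RHS](eqz_modDr 1) subrK.
by rewrite -addn1 PoszD.
Qed.
Lemma iotaS0 k : iota 0 k.+1 = 0%N :: [seq j.+1 | j <- iota 0 k].
Proof. by rewrite /= -[1%N]/(1 + 0)%N iotaDl. Qed.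

Lemma Fop_cons n i x u : Fop n i (x :: u) =
  (if congr n i x then [:: (1, (x + 1) :: u)] else [::]) ++
  [seq (kval n i.+1 x / kval n i x * q.1, x :: q.2) | q <- Fop n i u].
Proof.
rewrite /Fop /= (iotaDl 1 0) filter_map -!map_comp.
case: (congr n i x) => /=; rewrite ?big_nil; [congr (_ :: _)|]; rewrite -map_comp (@eq_filter _ _ (fun j => congr n i u`_j)) //;
  by elim: [seq _ <- _ | _] => //= a l ->; rewrite big_cons.
Qed.

Lemma Eop_cons n i x u : Eop n i (x :: u) =
  (if congr n i (x - 1) then [:: (\prod_(y <- u) (kval n i y / kval n i.+1 y), (x - 1) :: u)] else [::]) ++
  [seq (q.1, x :: q.2) | q <- Eop n i u].
Proof.
rewrite /Eop /= (iotaDl 1 0) filter_map -!map_comp.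
case: (congr n i (x - 1)) => /=; rewrite ?drop0; [congr (_ :: _)|];
  rewrite -map_comp (@eq_filter _ _ (fun j => congr n i (u`_j - 1))) //;
  by elim: [seq _ <- _ | _] => //= a l ->.
Qed.

Lemma count0_mem {p : pred int} {u y} : count p u = 0%N -> y \in u -> ~~ p y.
Proof. by move=> h; apply/hasPn; rewrite has_count h. Qed.

Lemma map_if0 (p : pred int) f u : count p u = 0%N ->
  map (fun x => if p x then f x else x) u = u.
Proof.
elim: u => //= x u IH /eqP; rewrite addn_eq0 => /andP[h1 /eqP h2].
by rewrite IH //; move: h1; case: (p x).
Qed.

Lemma Fop_none n i u : count (congr n i) u = 0%N -> Fop n i u = [::].
Proof.
elim: u => [|x u IH] /=; first by rewrite /Fop.
move/eqP; rewrite addn_eq0 => /andP[h1 /eqP h2].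
by rewrite Fop_cons IH //; move: h1; case: (congr n i x).
Qed.

Lemma Eop_none n i u : count (congr n i.+1) u = 0%N -> Eop n i u = [::].
Proof.
elim: u => [|x u IH] /=; first by rewrite /Eop.
move/eqP; rewrite addn_eq0 => /andP[h1 /eqP h2].
by rewrite Eop_cons IH // -congr_sub1; move: h1; case: (congr n i.+1 x).
Qed.

Lemma Fop_one n i u : count (congr n i) u = 1%N -> count (congr n i.+1) u = 0%N ->
  Fop n i u = [:: (1, map (fun x => if congr n i x then x + 1 else x) u)].
Proof.
elim: u => [|x u IH] //=.
move=> h1 /eqP; rewrite addn_eq0 => /andP[h2 /eqP h3].
rewrite Fop_cons; case: (boolP (congr n i x)) => hx.
  move: h1; rewrite hx /= add1n => -[h1].
  by rewrite Fop_none // map_if0.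
move: h1; rewrite (negbTE hx) /= add0n => h1.
have h2' : congr n i.+1 x = false by move: h2; case: (congr _ _ _).
rewrite IH //= /kval (negbTE hx) h2' divr1 mulr1.
by [].
Qed.

Lemma Eop_one n i u : count (congr n i.+1) u = 1%N -> count (congr n i) u = 0%N ->
  Eop n i u = [:: (1, map (fun x => if congr n i.+1 x then x - 1 else x) u)].
Proof.
elim: u => [|x u IH] //=.
move=> h1 /eqP; rewrite addn_eq0 => /andP[h2 /eqP h3].
rewrite Eop_cons -congr_sub1; case: (boolP (congr n i.+1 x)) => hx.
  move: h1; rewrite hx /= add1n => -[h1].
  rewrite Eop_none // map_if0 // big1_seq //= => y hy.
  by rewrite /kval (negbTE (count0_mem h1 hy)) (negbTE (count0_mem h3 hy)) divr1.
move: h1; rewrite (negbTE hx) /= add0n => h1.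
by rewrite IH.
Qed.

Lemma modS n a : (0 < n)%N -> (a <= n)%N -> (a %% n = if a == n then 0 else a)%N.
Proof. by move=> n0 an; case: eqP => [->|h]; rewrite ?modnn // modn_small //; lia. Qed.

Lemma rho_add1' n y : (0 < n)%N ->
  rho n (y + 1) = if (rho n y).+1 == n then 0%N else (rho n y).+1.
Proof. by move=> n0; rewrite rho_add1 // modS //; apply: rho_lt. Qed.

Lemma rho_sub1 n y : (0 < n)%N ->
  rho n (y - 1) = if rho n y == 0%N then n.-1 else (rho n y).-1.
Proof.
move=> n0; have := rho_add1' n (y - 1) n0; rewrite subrK.
have := rho_lt n (y - 1) n0; move=> hl ->; case: (eqVneq (rho n (y - 1)).+1 n) => h /=; lia.
Qed.

Lemma act_cat X l1 l2 : act X (l1 ++ l2) = act X l1 ++ act X l2.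
Proof. by rewrite /act map_cat flatten_cat. Qed.

Lemma actw_cat w l1 l2 : actw w (l1 ++ l2) = actw w l1 ++ actw w l2.
Proof. by elim: w => //= X w ->; apply: act_cat. Qed.

Lemma coef_cat l1 l2 s : coef (l1 ++ l2) s = coef l1 s + coef l2 s.
Proof. by rewrite /coef big_cat. Qed.

Lemma act_single (X : op) c u u' : X u = [:: (1, u')] -> act X [:: (c, u)] = [:: (c, u')].
Proof. by move=> h; rewrite /act /= h /= mulr1. Qed.

Ltac crunch := repeat (case: ifP => ?); try reflexivity; lia.

Lemma Fchain n r t c : (0 < r)%N -> (r < n)%N ->
  (forall x, x \in t -> (0 < rho n x <= r)%N) ->
  (forall k, (0 < k <= r)%N -> count (fun y => rho n y == k) t = 1%N) ->
  forall m, (m <= r)%N ->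
  actw [seq Fop n i | i <- iota (r - m).+1 m] [:: (c, t)] =
  [:: (c, map (fun x => if (r - m < rho n x <= r)%N then x + 1 else x) t)].
Proof.
move=> r0 rn hR hU; have n0 : (0 < n)%N by lia.
elim=> [|m IH] hm.
  rewrite /= (@eq_map _ _ _ id) ?map_id // => x.
  by case: ifP => // h; lia.
have -> : (r - m.+1).+1 = (r - m)%N by lia.
rewrite /= IH; last by lia.
set k := (r - m)%N.
have kn : (k < n)%N by lia.
have k1 : (0 < k <= r)%N by lia.
rewrite (act_single _ _ _ _ (Fop_one _ _ _ _ _)).
- congr [:: (_, _)]; rewrite -map_comp; apply/eq_in_map => x hx /=.
  have := hR x hx; have := rho_lt n x n0; move=> h1 h2.
  rewrite congrE // (modn_small kn).
  case: (boolP (k < rho n x <= r)%N) => h3 /=; rewrite ?rho_add1' //; case: (eqVneq (rho n x).+1 n) => ? /=; crunch.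
- rewrite count_map -(hU k) //.
  apply: eq_in_count => x hx /=.
  have := hR x hx; have := rho_lt n x n0; move=> h1 h2.
  rewrite congrE // (modn_small kn).
  case: (boolP (k < rho n x <= r)%N) => h3 /=; rewrite ?rho_add1' //; case: (eqVneq (rho n x).+1 n) => ? /=; crunch.
- rewrite count_map; apply/eqP; rewrite -leqn0 leqNgt -has_count; apply/hasPn => x hx /=.
  have := hR x hx; have := rho_lt n x n0; move=> h1 h2.
  rewrite congrE // modS //.
  case: (boolP (k < rho n x <= r)%N) => h3 /=; rewrite ?rho_add1' //; case: (eqVneq (rho n x).+1 n) => ? /=; crunch.
Qed.

Lemma Echain n r t c : (0 < r)%N -> (r < n)%N ->
  (forall x, x \in t -> (0 < rho n x <= r)%N) ->
  (forall k, (0 < k <= r)%N -> count (fun y => rho n y == k) t = 1%N) ->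
  forall m, (m <= r.-1)%N ->
  foldr act [:: (c, map (fun x => if (0 < rho n x <= 1)%N then x - 1 else x) t)]
    [seq Eop n i | i <- rev (iota 1 m)] =
  [:: (c, map (fun x => if (0 < rho n x <= m.+1)%N then x - 1 else x) t)].
Proof.
move=> r0 rn hR hU; have n0 : (0 < n)%N by lia.
elim=> [|m IH] hm; first by [].
have -> : iota 1 m.+1 = rcons (iota 1 m) m.+1.
  by rewrite -(addn1 m) iotaD /= cats1 addnC.
rewrite rev_rcons /= IH; last by lia.
have kn : (m.+2 < n)%N by lia.
have k1 : (0 < m.+2 <= r)%N by lia.
rewrite (act_single _ _ _ _ (Eop_one _ _ _ _ _)).
- congr [:: (_, _)]; rewrite -map_comp; apply/eq_in_map => x hx /=.
  have := hR x hx; have := rho_lt n x n0; move=> h1 h2.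
  rewrite congrE // (modn_small kn).
  case: (boolP (0 < rho n x <= m.+1)%N) => h3 /=; rewrite ?rho_sub1 //;
   case: (eqVneq (rho n x) 0) => ? /=; crunch.
- rewrite count_map -[RHS](hU m.+2) //.
  apply: eq_in_count => x hx /=.
  have := hR x hx; have := rho_lt n x n0; move=> h1 h2.
  rewrite congrE // (modn_small kn).
  case: (boolP (0 < rho n x <= m.+1)%N) => h3 /=; rewrite ?rho_sub1 //;
   case: (eqVneq (rho n x) 0) => ? /=; crunch.
- rewrite count_map; apply/eqP; rewrite -leqn0 leqNgt -has_count; apply/hasPn => x hx /=.
  have := hR x hx; have := rho_lt n x n0; move=> h1 h2.
  rewrite congrE // modn_small; last by lia.
  case: (boolP (0 < rho n x <= m.+1)%N) => h3 /=; rewrite ?rho_sub1 //;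
   case: (eqVneq (rho n x) 0) => ? /=; crunch.
Qed.

Lemma weight_facts n r t : (0 < r)%N -> (r < n)%N -> weight n t = omega n r ->
  (forall x, x \in t -> (0 < rho n x <= r)%N) /\
  (forall k, (0 < k <= r)%N -> count (fun y => rho n y == k) t = 1%N).
Proof.
move=> r0 rn hw; have n0 : (0 < n)%N by lia.
have cw : forall k (hk : (k < n)%N), count (congr n k.+1) t = (k < r)%N.
  by move=> k hk; move/ffunP: hw => /(_ (Ordinal hk)); rewrite !ffunE.
split.
  move=> x hx; case: (boolP (0 < rho n x <= r)%N) => // hn; exfalso.
  have hl := rho_lt n x n0.
  have hc : forall k, (k < n)%N -> (r <= k)%N -> congr n k.+1 x -> False.
    move=> k hk hrk hc.
    have : (0 < count (congr n k.+1) t)%N by rewrite -has_count; apply/hasP; exists x.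
    by rewrite cw //; case: ltnP => //; lia.
  case: (eqVneq (rho n x) 0) => hj.
    apply: (hc n.-1); try lia.
    by rewrite prednK // congrE // modnn hj.
  apply: (hc (rho n x).-1); try lia.
  by rewrite prednK ?lt0n // congrE // modn_small.
move=> k hk; have hk' : (k.-1 < n)%N by lia.
have h := cw k.-1 hk'.
rewrite prednK in h; last by lia.
transitivity (count (congr n k) t).
  by apply: eq_count => y /=; rewrite congrE // modn_small //; lia.
by rewrite h; move: hk => /andP[_ ->].
Qed.

Lemma coef0 s : coef [::] s = 0.
Proof. by rewrite /coef big_nil. Qed.

Lemma actw_nil w : actw w [::] = [::].
Proof. by elim: w => //= X w ->. Qed.

Lemma modSn n : (1 < n)%N -> (n.+1 %% n = 1)%N.
Proof. by move=> n1; rewrite -addn1 modnDl modn_small. Qed.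

Theorem lemma2p1p6 (r n : nat) :
  (3 <= r)%N -> (r.+1 <= n)%N ->
  forall e : vec,
    (forall p, p \in e -> size p.2 = r /\ weight n p.2 = omega n r) ->
    (forall s, coef (act Rop e) s
               = coef (actw [seq Fop n i | i <- iota 1 r] e) s) /\
    (forall s, coef (act Rinvop e) s
               = coef (actw (rcons [seq Eop n i | i <- rev (iota 1 r.-1)] (Eop n n)) e) s).
Proof.
move=> r3 rn; have r0 : (0 < r)%N by lia.
have n0 : (0 < n)%N by lia.
elim=> [|p e IH] he.
  by split=> s; rewrite actw_nil.
have [IH1 IH2] : _ /\ _ := IH (fun q hq => he q (ltac:(by rewrite inE hq orbT))).
case: p he => c t he.
have [_ hw] := he (c, t) (mem_head _ _).
have [hR hU] := weight_facts n r t r0 rn hw.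
rewrite -cat1s; split => s; rewrite act_cat actw_cat !coef_cat ?coef0 ?addr0.
  rewrite IH1; congr (_ + _).
  rewrite (_ : iota 1 r = iota (r - r).+1 r); last by rewrite subnn.
  rewrite Fchain // /act /= mulr1 ?cats0 subnn.
  congr (coef [:: (_, _)] _); apply/eq_in_map => x hx.
  by rewrite hR.
rewrite IH2; congr (_ + _).
rewrite /actw foldr_rcons.
rewrite (act_single _ _ _ _ (Eop_one _ _ _ _ _)).
- rewrite (_ : map _ t = map (fun x => if (0 < rho n x <= 1)%N then x - 1 else x) t).
    rewrite (Echain n r) //.
    rewrite /act /= mulr1 ?cats0.
    congr (coef [:: (_, _)] _); apply/eq_in_map => x hx.
    by rewrite prednK // hR.
  apply/eq_in_map => x hx /=.
  rewrite congrE // modSn; last by lia.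
  have -> : (0 < rho n x <= 1)%N = (rho n x == 1%N) by lia.
  by [].
- rewrite -[RHS](hU 1%N); last by lia.
  apply: eq_in_count => x hx /=.
  by rewrite congrE // modSn //; lia.
- apply/eqP; rewrite -leqn0 leqNgt -has_count; apply/hasPn => x hx /=.
  have := hR x hx.
  by rewrite congrE // modnn; lia.
Qed.
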